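(* For each $n\ge 0$ there is an isomorphism of $A_n$-bimodules $$D_{n+1}\otimes_{A_{n+1}}X_n\cong A_n\oplus\big(X_{n-1}\otimes_{A_{n-1}}D_n\big),$$ where $A_n$ carries its standard bimodule structure, and for $n=0$ the second summand is interpreted as $0$.
   Context: $A_n$ is the nilCoxeter algebra: the unital $\mathbb{Q}$-algebra generated by $Y_1,\dots,Y_{n-1}$ with relations $Y_i^2=0$, $Y_iY_j=Y_jY_i$ for $|i-j|>1$, $Y_iY_{i+1}Y_i=Y_{i+1}Y_iY_{i+1}$ ($A_0=A_1=\mathbb{Q}$). Let $\chi_n:A_n\to A_{n+1}$, $\chi_n(Y_i)=Y_i$. $X_n$ is $A_{n+1}$ as an $(A_{n+1},A_n)$-bimodule (right action via $\chi_n$) and $D_{n+1}$ is $A_{n+1}$ as an $(A_n,A_{n+1})$-bimodule (left action via $\chi_n$). *)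

(* Defs.v *)
From HB Require Import structures.
From mathcomp Require Import all_boot all_order all_fingroup all_algebra.
Set Implicit Arguments. Unset Strict Implicit. Unset Printing Implicit Defensive.
Import GRing.Theory.
Local Open Scope ring_scope.

(** * The nilCoxeter algebra A_n over Q, realized on its standard basis
    {Y_w : w in S_n}, with Y_u Y_v = Y_{uv} if l(uv) = l(u) + l(v) and 0
    otherwise (l = Coxeter length = number of inversions). *)

Definition inv_count n (w : 'S_n) : nat :=
  #|[set p : 'I_n * 'I_n | (p.1 < p.2)%N && (w p.2 < w p.1)%N]|.

Notation NC n := {ffun 'S_n -> rat^o}.

Definition Yb n (w : 'S_n) : NC n := [ffun v => ((v == w) : nat)%:R].

Definition Ygen n (i : 'I_n) (h : (i.+1 < n)%N) : NC n :=
  Yb (tperm i (Ordinal h)).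

Definition ncmul n (a b : NC n) : NC n :=
  \sum_(u : 'S_n) \sum_(v : 'S_n)
     (a u * b v * ((inv_count (u * v)%g == inv_count u + inv_count v)%N : nat)%:R)
       *: Yb (u * v)%g.

Definition ncone n : NC n := Yb 1%g.

(** chi_n : A_n -> A_{n+1}, induced by S_n -> S_{n+1} (fixing the last point);
    it sends Y_i to Y_i. *)
Definition ncchi n (a : NC n) : NC n.+1 :=
  \sum_(w : 'S_n) a w *: Yb (lift_perm ord_max ord_max w).

Definition is_bimod (p q : nat) (M : lmodType rat)
    (l : NC p -> M -> M) (r : M -> NC q -> M) : Prop :=
  (forall (c : rat) a b m, l (c *: a + b) m = c *: l a m + l b m) /\
  (forall (c : rat) a m m', l a (c *: m + m') = c *: l a m + l a m') /\
  (forall (c : rat) m m' b, r (c *: m + m') b = c *: r m b + r m' b) /\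
  (forall (c : rat) m a b, r m (c *: a + b) = c *: r m a + r m b) /\
  (forall a b m, l (ncmul a b) m = l a (l b m)) /\
  (forall m a b, r m (ncmul a b) = r (r m a) b) /\
  (forall m, l (ncone p) m = m) /\
  (forall m, r m (ncone q) = m) /\
  (forall a m b, r (l a m) b = l a (r m b)).

Definition is_bimod_hom (p q : nat) (M N : lmodType rat)
    (lM : NC p -> M -> M) (rM : M -> NC q -> M)
    (lN : NC p -> N -> N) (rN : N -> NC q -> N) (f : M -> N) : Prop :=
  (forall (c : rat) x y, f (c *: x + y) = c *: f x + f y) /\
  (forall a x, f (lM a x) = lN a (f x)) /\
  (forall x b, f (rM x b) = rN (f x) b).

Definition bimod_iso (p q : nat) (M N : lmodType rat)
    (lM : NC p -> M -> M) (rM : M -> NC q -> M)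
    (lN : NC p -> N -> N) (rN : N -> NC q -> N) : Prop :=
  exists f : M -> N, is_bimod_hom lM rM lN rN f /\ bijective f.

Definition is_balanced (p s q : nat) (M N T : lmodType rat)
    (lM : NC p -> M -> M) (rM : M -> NC s -> M)
    (lN : NC s -> N -> N) (rN : N -> NC q -> N)
    (lT : NC p -> T -> T) (rT : T -> NC q -> T) (t : M -> N -> T) : Prop :=
  (forall (c : rat) m m' n, t (c *: m + m') n = c *: t m n + t m' n) /\
  (forall (c : rat) m n n', t m (c *: n + n') = c *: t m n + t m n') /\
  (forall m a n, t (rM m a) n = t m (lN a n)) /\
  (forall b m n, t (lM b m) n = lT b (t m n)) /\
  (forall m n c, t m (rN n c) = rT (t m n) c).

(** (T, lT, rT, t) is a tensor product M (x)_{A_s} N of bimodules: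
    the universal balanced map into (A_p, A_q)-bimodules. *)
Definition is_tensor (p s q : nat) (M N T : lmodType rat)
    (lM : NC p -> M -> M) (rM : M -> NC s -> M)
    (lN : NC s -> N -> N) (rN : N -> NC q -> N)
    (lT : NC p -> T -> T) (rT : T -> NC q -> T) (t : M -> N -> T) : Prop :=
  is_bimod lT rT /\
  is_balanced lM rM lN rN lT rT t /\
  (forall (P : lmodType rat) (lP : NC p -> P -> P) (rP : P -> NC q -> P)
          (f : M -> N -> P),
     is_bimod lP rP -> is_balanced lM rM lN rN lP rP f ->
     exists g : T -> P,
       [/\ is_bimod_hom lT rT lP rP g,
           (forall m n, g (t m n) = f m n) &
           (forall g' : T -> P, is_bimod_hom lT rT lP rP g' ->
              (forall m n, g' (t m n) = f m n) -> forall x, g' x = g x)]).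

Definition Al n (a x : NC n) : NC n := ncmul a x.
Definition Ar n (x b : NC n) : NC n := ncmul x b.

(** D_{n+1} = A_{n+1} as (A_n, A_{n+1})-bimodule (left action via chi_n). *)
Definition Dl n (a : NC n) (x : NC n.+1) : NC n.+1 := ncmul (ncchi a) x.
Definition Dr n (x b : NC n.+1) : NC n.+1 := ncmul x b.

(** X_n = A_{n+1} as (A_{n+1}, A_n)-bimodule (right action via chi_n). *)
Definition Xl n (a x : NC n.+1) : NC n.+1 := ncmul a x.
Definition Xr n (x : NC n.+1) (b : NC n) : NC n.+1 := ncmul x (ncchi b).

Definition sum_l n (T : lmodType rat) (lT : NC n -> T -> T)
    (a : NC n) (x : (NC n * T)%type) : (NC n * T)%type :=
  (ncmul a x.1, lT a x.2).
Definition sum_r n (T : lmodType rat) (rT : T -> NC n -> T)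
    (x : (NC n * T)%type) (b : NC n) : (NC n * T)%type :=
  (ncmul x.1 b, rT x.2 b).

(* Main.v *)
Require Import Defs.
From HB Require Import structures.
From mathcomp Require Import all_boot all_order all_fingroup all_algebra zify.
Set Implicit Arguments. Unset Strict Implicit. Unset Printing Implicit Defensive.
Import GRing.Theory.
Local Open Scope ring_scope.

Notation lft x := (lift_perm ord_max ord_max x).

Section Len.
Variable n : nat.
Implicit Types a b w : 'S_n.

Definition tind w (p : 'I_n * 'I_n) : nat := ((p.1 < p.2) && (w p.2 < w p.1))%N.

Lemma inv_sum w : inv_count w = (\sum_p tind w p)%N.
Proof.
rewrite /inv_count -sum1dep_card big_mkcond /=.
by apply: eq_bigr => p _; rewrite /tind; case: ifP.
Qed.

Lemma inv_sum_re a b :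
  inv_count b = (\sum_(p : 'I_n * 'I_n)
     (((a p.1 < a p.2) && (b (a p.2) < b (a p.1)))%N : nat))%N.
Proof.
rewrite inv_sum (reindex_inj (h := fun p : 'I_n * 'I_n => (a p.1, a p.2))) //.
by move=> [i j] [k l] /= [/perm_inj -> /perm_inj ->].
Qed.

Lemma inv_mul_sum a b :
  inv_count (a * b)%g = (\sum_(p : 'I_n * 'I_n)
     (((p.1 < p.2) && (b (a p.2) < b (a p.1)))%N : nat))%N.
Proof. by rewrite inv_sum; apply: eq_bigr => p _; rewrite /tind !permM. Qed.

Lemma neq_val_perm a (i j : 'I_n) : i != j -> (val (a i) != val (a j)).
Proof.
move=> H; apply/negP => /eqP/val_inj/perm_inj E; by rewrite E eqxx in H.
Qed.

Lemma len_sub a b : (inv_count (a * b)%g <= inv_count a + inv_count b)%N.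
Proof.
rewrite inv_mul_sum (inv_sum a) (inv_sum_re a b) -big_split /=.
apply: leq_sum => [[i j]] _ /=; rewrite /tind /=.
case: (ltngtP i j) => Hij; case: (ltngtP (a i) (a j)) => Ha;
  case: (ltngtP (b (a i)) (b (a j))) => Hb //=.
all: try (by move/val_inj/perm_inj: Ha => E; rewrite E ltnn in Hij).
Qed.

Lemma len_addP a b :
  (forall i j : 'I_n, (i < j)%N -> (a j < a i)%N -> (b (a j) < b (a i))%N) ->
  inv_count (a * b)%g = (inv_count a + inv_count b)%N.
Proof.
move=> H.
rewrite inv_mul_sum (inv_sum a) (inv_sum_re a b) -big_split /=.
apply: eq_bigr => [[i j]] _ /=; rewrite /tind /=.
case: (ltngtP i j) => Hij; case: (ltngtP (a i) (a j)) => Ha;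
  case: (ltngtP (b (a i)) (b (a j))) => Hb //=.
all: try (by move/val_inj/perm_inj: Ha => E; rewrite E ltnn in Hij).
all: try (by move/val_inj: Hij => E; rewrite E ltnn in Ha).
all: by have := H _ _ Hij Ha; lia.
Qed.

End Len.

Lemma inv_sum2 n (w : 'S_n) : inv_count w = (\sum_i \sum_j tind w (i, j))%N.
Proof. by rewrite inv_sum pair_bigA; apply: eq_bigr => [[i j]]. Qed.
Lemma widen_lift n (i : 'I_n) : widen_ord (leqnSn n) i = lift ord_max i.
Proof. by apply/val_inj; rewrite /= /bump leqNgt ltn_ord. Qed.

Lemma len_lift n (x : 'S_n) : inv_count (lft x) = inv_count x.
Proof.
rewrite !inv_sum2 big_ord_recr /=.
rewrite [X in (_ + X)%N]big1 => [|j _]; last first.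
  by rewrite /tind /= ltnNge -ltnS ltn_ord.
rewrite addn0; apply: eq_bigr => i _.
rewrite big_ord_recr /= /tind /= !widen_lift lift_perm_id.
rewrite [X in (_ + X)%N]ifF ?addn0; last first. idtac.
  apply/negbTE/negP => /andP [_ H2].
  have := ltn_ord (lft x (lift ord_max i)); rewrite /= in H2. by rewrite ltnS leqNgt H2.
apply: eq_bigr => j _; rewrite /= !widen_lift !lift_perm_lift.
by rewrite !lift_max.
Qed.

Lemma lftEo n (x : 'S_n) (y : 'I_n) :
  nat_of_ord (lft x (widen_ord (leqnSn n) y)) = nat_of_ord (x y).
Proof. by rewrite widen_lift lift_perm_lift /= /bump leqNgt ltn_ord. Qed.

Lemma lftE n (x : 'S_n) (y : 'I_n.+1) (Hy : (nat_of_ord y < n)%N) :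
  nat_of_ord (lft x y) = nat_of_ord (x (Ordinal Hy)).
Proof.
have E : y = widen_ord (leqnSn n) (Ordinal Hy) by apply/val_inj.
by rewrite {1}E lftEo.
Qed.

Lemma lft_lt n (x : 'S_n) (y : 'I_n.+1) : (nat_of_ord y < n)%N -> (nat_of_ord (lft x y) < n)%N.
Proof. by move=> Hy; rewrite (lftE x Hy) ltn_ord. Qed.

Lemma lftN n (x : 'S_n) : lft x ord_max = ord_max.
Proof. exact: lift_perm_id. Qed.

Definition vq_fun n (q : 'I_n.+1) (y : 'I_n.+1) : 'I_n.+1 :=
  inord (if nat_of_ord y == n then nat_of_ord q else if (nat_of_ord y < q)%N then nat_of_ord y else (nat_of_ord y).+1).

Lemma vq_funE n (q y : 'I_n.+1) :
  nat_of_ord (vq_fun q y) =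
  (if nat_of_ord y == n then nat_of_ord q else if (nat_of_ord y < q)%N then nat_of_ord y else (nat_of_ord y).+1).
Proof.
rewrite /vq_fun /= inordK //; have := ltn_ord y; have := ltn_ord q.
by case: eqP => [//|Hn]; case: ifP => _ /=; lia.
Qed.

Lemma vq_inj n (q : 'I_n.+1) : injective (vq_fun q).
Proof.
move=> y z E; apply: ord_inj; have H := congr1 (@nat_of_ord _) E; rewrite !vq_funE in H.
move: H; have := ltn_ord y; have := ltn_ord z; have := ltn_ord q.
case: (eqVneq (nat_of_ord y) n) => [Ey|Hy]; case: (eqVneq (nat_of_ord z) n) => [Ez|Hz];
  rewrite ?Ey ?Ez;
  rewrite ?eqxx ?(negbTE Hy) ?(negbTE Hz);
  case: (ltnP y q); case: (ltnP z q); rewrite ?eqxx; try move/eqP: Hy; try move/eqP: Hz; lia.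
Qed.

Definition vq n (q : 'I_n.+1) : 'S_n.+1 := perm (@vq_inj n q).

Lemma vqE n (q y : 'I_n.+1) :
  nat_of_ord (vq q y) =
  (if nat_of_ord y == n then nat_of_ord q else if (nat_of_ord y < q)%N then nat_of_ord y else (nat_of_ord y).+1).
Proof. by rewrite permE vq_funE. Qed.

Definition sg m : 'S_(m.+2) := tperm (inord m) ord_max.

Lemma sgE m (y : 'I_(m.+2)) :
  nat_of_ord (sg m y) = (if nat_of_ord y == m then m.+1 else if nat_of_ord y == m.+1 then m else nat_of_ord y).
Proof.
rewrite /sg; case: tpermP => [->|->|H1 H2] /=.
- by rewrite inordK // eqxx.
- by rewrite inordK //; case: eqP => [|_]; [lia | rewrite eqxx].
- case: eqP => E1; first by case: H1; apply/val_inj; rewrite /= inordK.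
  case: eqP => E2 //; by case: H2; apply/val_inj.
Qed.

Lemma VE m (q : 'I_(m.+1)) (y : 'I_(m.+2)) (Hy : (nat_of_ord y < m.+1)%N) :
  nat_of_ord (lft (vq q) y) =
  (if nat_of_ord y == m then nat_of_ord q else if (nat_of_ord y < q)%N then nat_of_ord y else (nat_of_ord y).+1).
Proof. by rewrite (lftE _ Hy) vqE. Qed.

Lemma sVE m (q : 'I_(m.+1)) (y : 'I_(m.+2)) (Hy : (nat_of_ord y < m.+1)%N) :
  nat_of_ord (lft (vq q) (sg m y)) =
  (if nat_of_ord y == m then m.+1 else if (nat_of_ord y < q)%N then nat_of_ord y else (nat_of_ord y).+1).
Proof.
case: (eqVneq (nat_of_ord y) m) => [E|E].
  have -> : sg m y = ord_max by apply: ord_inj; rewrite sgE E eqxx.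
  by rewrite lftN.
have Hs : (nat_of_ord (sg m y) < m.+1)%N.
  have F : (nat_of_ord y == m.+1) = false by apply/negbTE/eqP; lia.
  by rewrite sgE (negbTE E) F.
have F : (nat_of_ord y == m.+1) = false by apply/negbTE/eqP; lia.
rewrite (VE _ Hs) sgE (negbTE E) F.
by rewrite (negbTE E).
Qed.

Lemma L1 m (x : 'S_(m.+1)) (q : 'I_(m.+1)) :
  inv_count (lft x * sg m * lft (vq q))%g =
  (inv_count x + inv_count (sg m) + inv_count (vq q))%N.
Proof.
have H1 : forall i j : 'I_(m.+2), (i < j)%N -> (sg m j < sg m i)%N ->
    (lft (vq q) (sg m j) < lft (vq q) (sg m i))%N.
  move=> i j Hij H.
  have Hi := ltn_ord i; have Hj := ltn_ord j.
  have [Ei Ej] : nat_of_ord i = m /\ nat_of_ord j = m.+1.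
    move: H; rewrite !sgE.
    case: (eqVneq (nat_of_ord i) m) => [E1|/eqP E1];
    case: (eqVneq (nat_of_ord i) m.+1) => [E2|/eqP E2];
    case: (eqVneq (nat_of_ord j) m) => [E3|/eqP E3];
    case: (eqVneq (nat_of_ord j) m.+1) => [E4|/eqP E4]; lia.
  have Hsj : (nat_of_ord (sg m j) < m.+1)%N by rewrite sgE Ej eqxx ifF //; lia.
  have -> : sg m i = ord_max by apply: ord_inj; rewrite sgE Ei eqxx.
  by rewrite lftN (VE _ Hsj) sgE Ej eqxx (gtn_eqF (ltnSn m)) eqxx /= ltn_ord.
have H2 : forall i j : 'I_(m.+2), (i < j)%N -> (lft x j < lft x i)%N ->
    ((sg m * lft (vq q))%g (lft x j) < (sg m * lft (vq q))%g (lft x i))%N.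
  move=> i j Hij H; rewrite !permM.
  have Hi : (nat_of_ord i < m.+1)%N by have := ltn_ord j; lia.
  have Hb := lft_lt x Hi.
  have Ha : (nat_of_ord (lft x j) < m.+1)%N by lia.
  rewrite (sVE _ Ha) (sVE _ Hb); have := ltn_ord q.
  case: (eqVneq (nat_of_ord (lft x j)) m) => [E1|/eqP E1];
  case: (eqVneq (nat_of_ord (lft x i)) m) => [E2|/eqP E2];
  case: (ltnP (lft x j) q); case: (ltnP (lft x i) q); lia.
rewrite -mulgA (len_addP H2) (len_addP H1) len_lift addnA.
by rewrite len_lift.
Qed.

Lemma L2 m (c : 'S_m) (q : 'I_(m.+1)) :
  inv_count (lft c * vq q)%g = (inv_count c + inv_count (vq q))%N.
Proof.
rewrite len_addP ?len_lift // => i j Hij H.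
have Hi : (nat_of_ord i < m)%N by have := ltn_ord j; lia.
have Hb := lft_lt c Hi.
rewrite !vqE; have := ltn_ord q.
set A := nat_of_ord (lft c i) in Hb H *; set B := nat_of_ord (lft c j) in H *.
case: (eqVneq (nat_of_ord (lft c j)) m) => [E1|/eqP E1];
case: (eqVneq (nat_of_ord (lft c i)) m) => [E2|/eqP E2];
case: (ltnP (lft c j) q); case: (ltnP (lft c i) q); lia.
Qed.

Lemma lft_inj n : injective (fun x : 'S_n => lft x).
Proof.
move=> a b E; apply/permP => i; apply: (@lift_inj _ ord_max).
by rewrite -!(@lift_perm_lift _ ord_max ord_max) E.
Qed.

Lemma lft_mul n (a b : 'S_n) : lft (a * b)%g = (lft a * lft b)%g.
Proof. by rewrite lift_permM. Qed.

Lemma lft1 n : lft (1 : 'S_n)%g = 1%g.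
Proof. exact: lift_perm1. Qed.

Lemma unlift_ex n (W : 'S_n.+1) : W ord_max = ord_max -> exists u : 'S_n, lft u = W.
Proof.
move=> HW.
pose f (i : 'I_n) := odflt i (unlift ord_max (W (lift ord_max i))).
have Hf : forall i, lift ord_max (f i) = W (lift ord_max i).
  move=> i; rewrite /f; case: unliftP => [j -> //|E].
  have : W ord_max = W (lift ord_max i) by rewrite HW.
  by move/perm_inj/eqP; rewrite (negbTE (neq_lift _ _)).
have finj : injective f.
  by move=> i j E; apply: (@lift_inj _ ord_max); apply: (@perm_inj _ W); rewrite -!Hf E.
exists (perm finj); apply/permP => y; case: (unliftP ord_max y) => [j ->|E].
  by rewrite lift_perm_lift permE Hf.
by rewrite E lift_perm_id HW.
Qed.

Lemma sg_comm m (c : 'S_m) : (lft (lft c) * sg m = sg m * lft (lft c))%g.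
Proof.
apply/permP => y; apply: ord_inj; rewrite !permM.
have Hy := ltn_ord y.
case: (ltngtP (nat_of_ord y) m) => Ey.
- have H1 : (nat_of_ord (lft (lft c) y) < m)%N.
    have Hy' : (nat_of_ord y < m.+1)%N by lia.
    rewrite (lftE _ Hy'); exact: lft_lt.
  have Hs : sg m y = y by apply: ord_inj; rewrite sgE ifF ?ifF //; apply/negbTE/eqP; lia.
  rewrite Hs sgE ifF ?ifF //; apply/negbTE/eqP; lia.
- have Ey' : y = ord_max by apply: ord_inj => /=; lia.
  rewrite Ey' lftN.
  have Hm : (nat_of_ord (sg m ord_max) < m.+1)%N by rewrite sgE /= ifF ?eqxx //; apply/negbTE/eqP; lia.
  have E2 : nat_of_ord (lft (lft c) (sg m ord_max)) = m.
    rewrite (lftE _ Hm).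
    have -> : Ordinal Hm = ord_max by apply: ord_inj; rewrite /= sgE /= ifF ?eqxx //; apply/negbTE/eqP; lia.
    by rewrite lftN.
  by rewrite E2 sgE /= ifF ?eqxx //; apply/negbTE/eqP; lia.
- have Hy' : (nat_of_ord y < m.+1)%N by lia.
  have E1 : nat_of_ord (lft (lft c) y) = m.
    rewrite (lftE _ Hy').
    have -> : Ordinal Hy' = ord_max by apply: ord_inj => /=; lia.
    by rewrite lftN.
  have -> : sg m y = ord_max by apply: ord_inj; rewrite sgE Ey eqxx.
  by rewrite lftN sgE E1 eqxx.
Qed.

Lemma sgN m : nat_of_ord (sg m ord_max) = m.
Proof. by rewrite sgE /= (gtn_eqF (ltnSn m)) eqxx. Qed.

Section Decomp.
Variable m : nat.
Implicit Types w : 'S_(m.+2).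

Definition qw w : 'I_(m.+1) := inord (w ord_max).
Definition vw w : 'S_(m.+1) := vq (qw w).
Definition uw w : 'S_(m.+1) :=
  odflt 1%g [pick u | lft u == (w * (lft (vw w))^-1 * sg m)%g].

Lemma qw_val w : w ord_max != ord_max -> nat_of_ord (qw w) = w ord_max.
Proof.
move=> H; rewrite /qw inordK //.
have := ltn_ord (w ord_max); move: H => /eqP H Hl.
have : nat_of_ord (w ord_max) <> m.+1 by move=> E; apply: H; apply: ord_inj.
lia.
Qed.

Lemma uw_spec w : w ord_max != ord_max ->
  lft (uw w) = (w * (lft (vw w))^-1 * sg m)%g.
Proof.
move=> H; rewrite /uw; case: pickP => [u /eqP //|Hn].
have Hm : (m < m.+1)%N by [].
pose mm : 'I_(m.+2) := widen_ord (leqnSn m.+1) (Ordinal Hm).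
have HV : lft (vw w) mm = w ord_max.
  apply: ord_inj; rewrite lftEo /vw vqE /= eqxx; exact: qw_val.
have Hfix : (w * (lft (vw w))^-1 * sg m)%g ord_max = ord_max.
  rewrite !permM -HV permK; apply: ord_inj; rewrite sgE /= eqxx //.
have [u Hu] := unlift_ex Hfix.
by have := Hn u; rewrite Hu eqxx.
Qed.

Lemma decomp w : w ord_max != ord_max ->
  w = (lft (uw w) * sg m * lft (vw w))%g.
Proof.
move=> H; rewrite uw_spec // -!mulgA.
by rewrite [(sg m * (sg m * _))%g]mulgA tperm2 mul1g mulVg mulg1.
Qed.

Lemma decomp_fix x q : (lft x * sg m * lft (vq q))%g ord_max != ord_max.
Proof.
rewrite !permM lftN.
have Hs : (nat_of_ord (sg m ord_max) < m.+1)%N by rewrite sgN.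
apply/eqP => /(congr1 (@nat_of_ord _)); rewrite (VE _ Hs) sgN eqxx /=.
have := ltn_ord q; lia.
Qed.

Lemma decomp_uniq x q (w := (lft x * sg m * lft (vq q))%g) :
  qw w = q /\ uw w = x.
Proof.
have Hq : qw w = q.
  apply: ord_inj; rewrite qw_val ?decomp_fix //.
  rewrite /w !permM lftN.
  have Hs : (nat_of_ord (sg m ord_max) < m.+1)%N by rewrite sgN.
  by rewrite (VE _ Hs) sgN eqxx.
split=> //; apply: (@lft_inj m.+1); rewrite uw_spec ?decomp_fix // /vw Hq /w.
by rewrite -!mulgA mulKVg tperm2 mulg1.
Qed.
End Decomp.

Definition lin (U V : lmodType rat) (f : U -> V) :=
  forall (c : rat) x y, f (c *: x + y) = c *: f x + f y.

Section Lin.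
Variables (U V : lmodType rat) (f : U -> V) (Hf : lin f).
Lemma lin0 : f 0 = 0.
Proof. by have := Hf (-1) 0 0; rewrite scaleN1r oppr0 addr0 scaleN1r addNr. Qed.
Lemma linD x y : f (x + y) = f x + f y.
Proof. by have := Hf 1 x y; rewrite !scale1r. Qed.
Lemma linZ c x : f (c *: x) = c *: f x.
Proof. by have := Hf c x 0; rewrite !addr0 lin0 addr0. Qed.
Lemma lin_sum I (r : seq I) (P : pred I) (F : I -> U) :
  f (\sum_(i <- r | P i) F i) = \sum_(i <- r | P i) f (F i).
Proof.
elim/big_rec2: _ => [|i y1 y2 _ <-]; first exact: lin0.
by rewrite linD.
Qed.
End Lin.

Lemma lin_comp (U V W : lmodType rat) (f : U -> V) (g : V -> W) :
  lin f -> lin g -> lin (fun x => g (f x)).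
Proof. by move=> Hf Hg c x y; rewrite Hf Hg. Qed.

Lemma ncZE n (c : rat) (a : NC n) w : (c *: a) w = c * a w.
Proof. by rewrite ffunE. Qed.
Lemma ncDE n (a b : NC n) w : (a + b) w = a w + b w.
Proof. by rewrite ffunE. Qed.
Lemma ncYE n (u w : 'S_n) : Yb u w = ((w == u) : nat)%:R.
Proof. by rewrite ffunE. Qed.

Lemma nc_expand n (a : NC n) : a = \sum_w a w *: Yb w.
Proof.
apply/ffunP => v; rewrite sum_ffunE (bigD1 v) //= big1 => [|w Hw].
  by rewrite ncZE ncYE eqxx mulr1 addr0.
by rewrite ncZE ncYE eq_sym (negbTE Hw) mulr0.
Qed.

Lemma lin_ext n (V : lmodType rat) (f g : NC n -> V) :
  lin f -> lin g -> (forall w, f (Yb w) = g (Yb w)) -> forall a, f a = g a.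
Proof.
move=> Hf Hg H a; rewrite (nc_expand a) !lin_sum //.
by apply: eq_bigr => w _; rewrite !linZ // H.
Qed.

Lemma lin_ext2 p q (V : lmodType rat) (f g : NC p -> NC q -> V) :
  (forall b, lin (fun a => f a b)) -> (forall b, lin (fun a => g a b)) ->
  (forall a, lin (f a)) -> (forall a, lin (g a)) ->
  (forall u v, f (Yb u) (Yb v) = g (Yb u) (Yb v)) -> forall a b, f a b = g a b.
Proof.
move=> Hf1 Hg1 Hf2 Hg2 H a b.
apply: (lin_ext (f := fun a => f a b) (g := fun a => g a b)) => // u.
by apply: lin_ext => // v.
Qed.

Notation ln := inv_count.
Definition dl n (u v : 'S_n) : rat := ((ln (u * v)%g == ln u + ln v)%N : nat)%:R.

Lemma ncmul_YY n (u v : 'S_n) : ncmul (Yb u) (Yb v) = dl u v *: Yb (u * v)%g.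
Proof.
rewrite /ncmul (bigD1 u) //= [X in _ + X]big1 => [|u' Hu]; last first.
  by apply: big1 => v' _; rewrite ncYE (negbTE Hu) !mul0r scale0r.
rewrite addr0 (bigD1 v) //= [X in _ + X]big1 => [|v' Hv]; last first.
  by rewrite !ncYE (negbTE Hv) mulr0 mul0r scale0r.
by rewrite addr0 !ncYE !eqxx !mul1r.
Qed.

Lemma ncmul_linl n (b : NC n) : lin (fun a => ncmul a b).
Proof.
move=> c a a'; rewrite /ncmul scaler_sumr -big_split; apply: eq_bigr => u _.
rewrite scaler_sumr -big_split; apply: eq_bigr => v _.
by rewrite /= scalerA -scalerDl ncDE ncZE !mulrDl !mulrA.
Qed.

Lemma ncmul_linr n (a : NC n) : lin (ncmul a).
Proof.
move=> c b b'; rewrite /ncmul scaler_sumr -big_split; apply: eq_bigr => u _.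
rewrite scaler_sumr -big_split; apply: eq_bigr => v _.
rewrite /= scalerA -scalerDl ncDE ncZE; congr (_ *: _).
by rewrite mulrDr mulrDl !mulrA [c * a u]mulrC.
Qed.

Lemma len1 n : ln (1 : 'S_n)%g = 0%N.
Proof.
have H1 : forall i j : 'I_n, (i < j)%N -> ((1%g : 'S_n) j < (1%g : 'S_n) i)%N -> ((1%g : 'S_n) ((1%g : 'S_n) j) < (1%g : 'S_n) ((1%g : 'S_n) i))%N by move=> i j _; rewrite !perm1.
have := len_addP H1; rewrite mulg1 => H; lia.
Qed.

Lemma len_assoc n (a b c : 'S_n) :
  ((ln (a * b)%g == ln a + ln b) && (ln (a * b * c)%g == ln (a * b)%g + ln c))%N =
  ((ln (b * c)%g == ln b + ln c) && (ln (a * (b * c))%g == ln a + ln (b * c)%g))%N.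
Proof.
have h1 := len_sub a b; have h2 := len_sub (a * b)%g c.
have h3 := len_sub b c; have h4 := len_sub a (b * c)%g.
rewrite -mulgA in h2 *.
apply/idP/idP => /andP [/eqP e1 /eqP e2]; apply/andP; split; apply/eqP;
  move: h1 h2 h3 h4 e1 e2; set X1 := ln (a * (b * c))%g; set X2 := ln (a * b)%g; set X3 := ln (b * c)%g; lia.
Qed.

Lemma dl_assoc n (a b c : 'S_n) :
  dl a b * dl (a * b)%g c = dl b c * dl a (b * c)%g.
Proof.
by rewrite /dl -!natrM !mulnb len_assoc.
Qed.

Lemma ncmul_assoc n (a b c : NC n) : ncmul (ncmul a b) c = ncmul a (ncmul b c).
Proof.
move: a b; apply: (lin_ext2 (f := fun a b => ncmul (ncmul a b) c)
                            (g := fun a b => ncmul a (ncmul b c))) => [b|b|a|a|u v].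
- exact: lin_comp (ncmul_linl b) (ncmul_linl c).
- exact: ncmul_linl.
- exact: lin_comp (ncmul_linr a) (ncmul_linl c).
- exact: lin_comp (ncmul_linl c) (ncmul_linr a).
move: c; apply: (lin_ext (f := fun c => ncmul (ncmul (Yb u) (Yb v)) c)
                         (g := fun c => ncmul (Yb u) (ncmul (Yb v) c))) => [||w].
- exact: ncmul_linr.
- exact: lin_comp (ncmul_linr (Yb v)) (ncmul_linr (Yb u)).
rewrite !ncmul_YY (linZ (ncmul_linl _)) (linZ (ncmul_linr _)) !ncmul_YY !scalerA.
by rewrite dl_assoc mulgA.
Qed.

Lemma ncmul1l n (a : NC n) : ncmul (ncone n) a = a.
Proof.
apply: (lin_ext (f := ncmul (ncone n)) (g := id)) => [||w]; first exact: ncmul_linr.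
  by move=> c x y.
by rewrite /ncone ncmul_YY /dl mul1g len1 add0n eqxx scale1r.
Qed.

Lemma ncmul1r n (a : NC n) : ncmul a (ncone n) = a.
Proof.
apply: (lin_ext (f := fun a => ncmul a (ncone n)) (g := id)) => [||w]; first exact: ncmul_linl.
  by move=> c x y.
by rewrite /ncone ncmul_YY /dl mulg1 len1 addn0 eqxx scale1r.
Qed.

Lemma ncmul0l n (a : NC n) : ncmul 0 a = 0.
Proof. exact: (lin0 (ncmul_linl a)). Qed.
Lemma ncmul0r n (a : NC n) : ncmul a 0 = 0.
Proof. exact: (lin0 (ncmul_linr a)). Qed.

Lemma chi_lin n : lin (@ncchi n).
Proof.
move=> c a b; rewrite /ncchi scaler_sumr -big_split; apply: eq_bigr => w _ /=.
by rewrite scalerA -scalerDl ncDE ncZE.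
Qed.

Lemma chi_Yb n (w : 'S_n) : ncchi (Yb w) = Yb (lft w).
Proof.
rewrite /ncchi (bigD1 w) //= big1 => [|u Hu]; first by rewrite ncYE eqxx scale1r addr0.
by rewrite ncYE (negbTE Hu) scale0r.
Qed.

Lemma chi_mul n (a b : NC n) : ncchi (ncmul a b) = ncmul (ncchi a) (ncchi b).
Proof.
move: a b; apply: (lin_ext2 (f := fun a b => ncchi (ncmul a b))
                            (g := fun a b => ncmul (ncchi a) (ncchi b))) => [b|b|a|a|u v].
- exact: lin_comp (ncmul_linl b) (@chi_lin n).
- exact: lin_comp (@chi_lin n) (ncmul_linl _).
- exact: lin_comp (ncmul_linr a) (@chi_lin n).
- exact: lin_comp (@chi_lin n) (ncmul_linr _).
rewrite ncmul_YY (linZ (@chi_lin n)) !chi_Yb ncmul_YY /dl -lft_mul !len_lift.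
done.
Qed.

Lemma chi_one n : ncchi (ncone n) = ncone n.+1.
Proof. by rewrite /ncone chi_Yb lft1. Qed.

Definition ncpi n (z : NC n.+1) : NC n := [ffun w => z (lft w)].

Lemma pi_lin n : lin (@ncpi n).
Proof. by move=> c a b; apply/ffunP => w; rewrite !ffunE. Qed.

Lemma pi_Yb_lft n (w : 'S_n) : ncpi (Yb (lft w)) = Yb w.
Proof.
apply/ffunP => v; rewrite !ffunE; congr (_%:R); congr nat_of_bool.
by rewrite (inj_eq (@lft_inj n)).
Qed.

Lemma pi_Yb_out n (w : 'S_n.+1) : w ord_max != ord_max -> ncpi (Yb w) = 0.
Proof.
move=> H; apply/ffunP => v; rewrite !ffunE.
case: eqP => // E; by move: H; rewrite -E lftN eqxx.
Qed.

Lemma pi_chi n (a : NC n) : ncpi (ncchi a) = a.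
Proof.
apply: (lin_ext (f := fun a => ncpi (ncchi a)) (g := id)) => [||w].
- exact: lin_comp (@chi_lin n) (@pi_lin n).
- by move=> c x y.
by rewrite chi_Yb pi_Yb_lft.
Qed.

Lemma bimod_DX n : is_bimod (@Dl n) (@Xr n).
Proof.
rewrite /Dl /Xr; split; [|split; [|split; [|split; [|split; [|split; [|split; [|split]]]]]]].
- by move=> c a b m; rewrite (chi_lin c a b) ncmul_linl.
- by move=> c a m m'; rewrite ncmul_linr.
- by move=> c m m' b; rewrite ncmul_linl.
- by move=> c m a b; rewrite (chi_lin c a b) ncmul_linr.
- by move=> a b m; rewrite chi_mul ncmul_assoc.
- by move=> m a b; rewrite chi_mul ncmul_assoc.
- by move=> m; rewrite chi_one ncmul1l.
- by move=> m; rewrite chi_one ncmul1r.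
- by move=> a m b; rewrite ncmul_assoc.
Qed.

Lemma bimod_A n : is_bimod (@Al n) (@Ar n).
Proof.
rewrite /Al /Ar; split; [|split; [|split; [|split; [|split; [|split; [|split; [|split]]]]]]].
- by move=> c a b m; rewrite ncmul_linl.
- by move=> c a m m'; rewrite ncmul_linr.
- by move=> c m m' b; rewrite ncmul_linl.
- by move=> c m a b; rewrite ncmul_linr.
- by move=> a b m; rewrite ncmul_assoc.
- by move=> m a b; rewrite ncmul_assoc.
- by move=> m; rewrite ncmul1l.
- by move=> m; rewrite ncmul1r.
- by move=> a m b; rewrite ncmul_assoc.
Qed.

Lemma bimod_sum n (T : lmodType rat) (l : NC n -> T -> T) (r : T -> NC n -> T) :
  is_bimod l r -> is_bimod (sum_l l) (sum_r r).
Proof.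
case=> [H1 [H2 [H3 [H4 [H5 [H6 [H7 [H8 H9]]]]]]]].
rewrite /sum_l /sum_r; split; [|split; [|split; [|split; [|split; [|split; [|split; [|split]]]]]]].
- by move=> c a b [x t]; rewrite /= ncmul_linl H1.
- by move=> c a [x t] [x' t']; rewrite /= ncmul_linr H2.
- by move=> c [x t] [x' t'] b; rewrite /= ncmul_linl H3.
- by move=> c [x t] a b; rewrite /= ncmul_linr H4.
- by move=> a b [x t]; rewrite /= ncmul_assoc H5.
- by move=> [x t] a b; rewrite /= ncmul_assoc H6.
- by move=> [x t]; rewrite /= ncmul1l H7.
- by move=> [x t]; rewrite /= ncmul1r H8.
- by move=> a [x t] b; rewrite /= ncmul_assoc H9.
Qed.

Section Homs.
Variables (p q : nat).
Lemma hom_comp (M N P : lmodType rat)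
    (lM : NC p -> M -> M) (rM : M -> NC q -> M)
    (lN : NC p -> N -> N) (rN : N -> NC q -> N)
    (lP : NC p -> P -> P) (rP : P -> NC q -> P) f g :
  is_bimod_hom lM rM lN rN f -> is_bimod_hom lN rN lP rP g ->
  is_bimod_hom lM rM lP rP (fun x => g (f x)).
Proof.
case=> [f1 [f2 f3]] [g1 [g2 g3]]; split; [|split].
- by move=> c x y; rewrite f1 g1.
- by move=> a x; rewrite f2 g2.
- by move=> x b; rewrite f3 g3.
Qed.

Lemma hom_id (M : lmodType rat) (lM : NC p -> M -> M) (rM : M -> NC q -> M) :
  is_bimod_hom lM rM lM rM id.
Proof. by split. Qed.

Lemma iso_trans (M N P : lmodType rat)
    (lM : NC p -> M -> M) (rM : M -> NC q -> M)
    (lN : NC p -> N -> N) (rN : N -> NC q -> N)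
    (lP : NC p -> P -> P) (rP : P -> NC q -> P) :
  bimod_iso lM rM lN rN -> bimod_iso lN rN lP rP -> bimod_iso lM rM lP rP.
Proof.
case=> f [Hf bf] [g [Hg bg]]; exists (fun x => g (f x)); split.
  exact: hom_comp Hf Hg.
exact: bij_comp bg bf.
Qed.
End Homs.

Lemma G1 n (T1 : lmodType rat) (l1 : NC n -> T1 -> T1) (r1 : T1 -> NC n -> T1)
    (t1 : NC n.+1 -> NC n.+1 -> T1) :
  is_tensor (@Dl n) (@Dr n) (@Xl n) (@Xr n) l1 r1 t1 ->
  bimod_iso l1 r1 (@Dl n) (@Xr n).
Proof.
case=> Hb1 [Hbal1 Huniv].
case: (Hbal1) => [B1 [B2 [B3 [B4 B5]]]].
have Hbal : is_balanced (@Dl n) (@Dr n) (@Xl n) (@Xr n) (@Dl n) (@Xr n) (@ncmul n.+1).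
  rewrite /is_balanced /Dl /Dr /Xl /Xr; split; [|split; [|split; [|split]]].
  - by move=> c m m' x; rewrite ncmul_linl.
  - by move=> c m x x'; rewrite ncmul_linr.
  - by move=> m a x; rewrite ncmul_assoc.
  - by move=> b m x; rewrite ncmul_assoc.
  - by move=> m x c; rewrite ncmul_assoc.
have [g [Hg Hgt _]] := Huniv _ _ _ _ (@bimod_DX n) Hbal.
exists g; split => //.
pose h z := t1 z (ncone n.+1).
have Hh : is_bimod_hom (@Dl n) (@Xr n) l1 r1 h.
  split; [|split].
  - by move=> c x y; rewrite /h B1.
  - by move=> a x; rewrite /h B4.
  - move=> x b; rewrite /h -B5.
    change (t1 (Dr x (ncchi b)) (ncone n.+1) = t1 x (Xr (ncone n.+1) b)).
    by rewrite B3 /Xl /Xr ncmul1l ncmul1r.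
exists h; last by move=> z; rewrite /h Hgt ncmul1r.
have [g0 [_ _ Hu]] := Huniv _ _ _ _ Hb1 Hbal1.
have Hc : is_bimod_hom l1 r1 l1 r1 (fun x => h (g x)) by exact: hom_comp Hg Hh.
have Ha : forall m x, h (g (t1 m x)) = t1 m x.
  move=> m x; rewrite /h Hgt.
  change (t1 (Dr m x) (ncone n.+1) = t1 m x).
  by rewrite B3 /Xl ncmul1r.
move=> x; have E1 := Hu id (hom_id _ _) (fun _ _ => erefl) x.
have E2 := Hu _ Hc Ha x.
by rewrite E2 -E1.
Qed.

Lemma S1_triv (w : 'S_1) : w = lft (1%g : 'S_0).
Proof. by apply/permP => i; apply: ord_inj; case: (w i) => [[]] //; case: (lft _ i) => [[]]. Qed.

Lemma chi_pi0 (z : NC 1) : ncchi (ncpi z) = z.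
Proof.
apply: (lin_ext (f := fun z => ncchi (ncpi z)) (g := id)) => [||w].
- exact: lin_comp (@pi_lin 0) (@chi_lin 0).
- by move=> c x y.
by rewrite [w]S1_triv pi_Yb_lft chi_Yb.
Qed.

Lemma G0 : bimod_iso (@Dl 0) (@Xr 0) (@Al 0) (@Ar 0).
Proof.
exists (@ncpi 0); split; last by exists (@ncchi 0); [exact: chi_pi0 | exact: pi_chi].
split; [|split].
- exact: pi_lin.
- move=> a x; rewrite /Dl /Al -{1}(chi_pi0 x) -chi_mul; exact: pi_chi.
- move=> x b; rewrite /Xr /Ar -{1}(chi_pi0 x) -chi_mul; exact: pi_chi.
Qed.


Lemma vq_right m (q : 'I_(m.+1)) (b : 'S_(m.+1)) :
  exists c : 'S_m, (vq q * b = lft c * vq (b q))%g.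
Proof.
have Hq : vq q ord_max = q by apply: ord_inj; rewrite vqE /= eqxx.
have Hq2 : vq (b q) ord_max = b q by apply: ord_inj; rewrite vqE /= eqxx.
have Hfix : (vq q * b * (vq (b q))^-1)%g ord_max = ord_max.
  by rewrite !permM Hq; apply: (@perm_inj _ (vq (b q))); rewrite permKV Hq2.
have [c Hc] := unlift_ex Hfix.
by exists c; rewrite Hc -mulgA mulVg mulg1.
Qed.

Lemma vq_max m : vq (ord_max : 'I_(m.+1)) = 1%g.
Proof.
apply/permP => y; apply: ord_inj; rewrite vqE perm1 /=.
have := ltn_ord y; case: eqP => [->|H] // Hy; rewrite ifT //; lia.
Qed.

Lemma Ys_comm m (c : NC m) :
  ncmul (Yb (sg m)) (ncchi (ncchi c)) = ncmul (ncchi (ncchi c)) (Yb (sg m)).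
Proof.
apply: (lin_ext (f := fun c => ncmul (Yb (sg m)) (ncchi (ncchi c)))
                (g := fun c => ncmul (ncchi (ncchi c)) (Yb (sg m)))) => [||w].
- exact: lin_comp (@chi_lin _) (lin_comp (@chi_lin _) (ncmul_linr _)).
- exact: lin_comp (@chi_lin _) (lin_comp (@chi_lin _) (ncmul_linl _)).
rewrite !chi_Yb !ncmul_YY /dl sg_comm addnC //.
Qed.

Lemma dl_L1 m (x : 'S_(m.+1)) (q : 'I_(m.+1)) :
  dl (sg m) (lft (vq q)) = 1 /\ dl (lft x) (sg m * lft (vq q))%g = 1.
Proof.
have h := L1 x q; have h1 := len_sub (sg m) (lft (vq q)).
have h2 := len_sub (lft x) (sg m * lft (vq q))%g.
rewrite -mulgA in h; rewrite /dl; rewrite ?len_lift in h1 h2 *.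
move: h h1 h2.
set A := ln (lft x * (sg m * lft (vq q)))%g; set B := ln (sg m * lft (vq q))%g.
move=> h h1 h2.
have E1 : B = (ln (sg m) + ln (vq q))%N by lia.
have E2 : A = (ln x + B)%N by lia.
by rewrite E2 E1 !eqxx.
Qed.

Lemma dl_left m (x u : 'S_(m.+1)) (q : 'I_(m.+1)) :
  dl (lft x) (lft u * sg m * lft (vq q))%g = dl x u.
Proof.
have h1 := L1 u q; have h2 := L1 (x * u)%g q.
rewrite lft_mul -!mulgA in h2; rewrite !mulgA in h2.
rewrite /dl !mulgA; move: h1 h2; rewrite len_lift.
set A := ln (lft x * lft u * sg m * lft (vq q))%g.
set B := ln (lft u * sg m * lft (vq q))%g.
move=> h1 h2; congr (nat_of_bool _)%:R; apply/eqP/eqP; lia.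
Qed.

Lemma w_right m (u y : 'S_(m.+1)) (q : 'I_(m.+1)) (c : 'S_m) :
  (vq q * y = lft c * vq (y q))%g ->
  (lft u * sg m * lft (vq q) * lft y)%g = (lft (u * lft c) * sg m * lft (vq (y q)))%g.
Proof.
move=> E; rewrite -mulgA -lft_mul E lft_mul lft_mul !mulgA.
by rewrite -(mulgA (lft u) (sg m)) -sg_comm mulgA.
Qed.

Lemma dl_right m (u y : 'S_(m.+1)) (q : 'I_(m.+1)) (c : 'S_m) :
  (vq q * y = lft c * vq (y q))%g ->
  dl (lft u * sg m * lft (vq q))%g (lft y) = dl (vq q) y * dl u (lft c).
Proof.
move=> E; rewrite /dl -natrM mulnb (w_right _ E).
have h1 := L1 u q; have h2 := L1 (u * lft c)%g (y q).
have h3 := L2 c (y q); rewrite -E in h3.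
have h4 := len_sub u (lft c); have h5 := len_sub (vq q) y.
rewrite !len_lift in h4 *.
move: h1 h2 h3 h4 h5.
set A := ln (lft (u * lft c) * sg m * lft (vq (y q)))%g.
set B := ln (lft u * sg m * lft (vq q))%g.
set C := ln (vq q * y)%g.
set D := ln (u * lft c)%g.
move=> h1 h2 h3 h4 h5; congr (nat_of_bool _)%:R.
apply/eqP/andP => [H|[/eqP H1 /eqP H2]]; [split; apply/eqP|]; lia.
Qed.

Section G2.
Variable m : nat.
Variables (T2 : lmodType rat) (l2 : NC m.+1 -> T2 -> T2) (r2 : T2 -> NC m.+1 -> T2)
  (t2 : NC m.+1 -> NC m.+1 -> T2).
Hypothesis HT2 : is_tensor (@Xl m) (@Xr m) (@Dl m) (@Dr m) l2 r2 t2.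

Lemma HB2 : is_bimod l2 r2. Proof. by case: HT2. Qed.
Lemma HBal2 : is_balanced (@Xl m) (@Xr m) (@Dl m) (@Dr m) l2 r2 t2.
Proof. by case: HT2 => _ []. Qed.

Lemma t2_linl y : lin (fun x => t2 x y).
Proof. by case: HBal2 => H _ c x x'; rewrite H. Qed.
Lemma t2_linr x : lin (t2 x).
Proof. by case: HBal2 => _ [H _] c y y'; rewrite H. Qed.
Lemma l2_linl t : lin (fun a => l2 a t).
Proof. by case: HB2 => H _ c a b; rewrite H. Qed.
Lemma l2_linr a : lin (l2 a).
Proof. by case: HB2 => _ [H _] c x y; rewrite H. Qed.
Lemma r2_linl b : lin (fun t => r2 t b).
Proof. by case: HB2 => _ [_ [H _]] c x y; rewrite H. Qed.
Lemma r2_linr t : lin (r2 t).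
Proof. by case: HB2 => _ [_ [_ [H _]]] c x y; rewrite H. Qed.

Definition phib (w : 'S_(m.+2)) : T2 :=
  if w ord_max == ord_max then 0 else t2 (Yb (uw w)) (Yb (vw w)).
Definition phi2 (z : NC m.+2) : T2 := \sum_w z w *: phib w.

Lemma phi2_lin : lin phi2.
Proof.
move=> c x y; rewrite /phi2 scaler_sumr -big_split; apply: eq_bigr => w _ /=.
by rewrite ncDE ncZE scalerDl scalerA.
Qed.

Lemma phi2_Yb w : phi2 (Yb w) = phib w.
Proof.
rewrite /phi2 (bigD1 w) //= big1 => [|u Hu]; first by rewrite ncYE eqxx scale1r addr0.
by rewrite ncYE (negbTE Hu) scale0r.
Qed.

Definition Phi (z : NC m.+2) : (NC m.+1 * T2)%type := (ncpi z, phi2 z).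

Lemma Phi_lin : lin Phi.
Proof. by move=> c x y; rewrite /Phi pi_lin phi2_lin. Qed.

Lemma bal3 x c y : t2 (ncmul x (ncchi c)) y = t2 x (ncmul (ncchi c) y).
Proof. by case: HBal2 => _ [_ [H _]]; exact: H. Qed.
Lemma bal4 b x y : t2 (ncmul b x) y = l2 b (t2 x y).
Proof. by case: HBal2 => _ [_ [_ [H _]]]; exact: H. Qed.
Lemma bal5 x y c : t2 x (ncmul y c) = r2 (t2 x y) c.
Proof. by case: HBal2 => _ [_ [_ [_ H]]]; exact: H. Qed.

Lemma fixP (w : 'S_(m.+2)) (x : 'S_(m.+1)) :
  ((lft x * w)%g ord_max == ord_max) = (w ord_max == ord_max).
Proof. by rewrite permM lftN. Qed.

Lemma Phi_left_pi (a : NC m.+1) (z : NC m.+2) : ncpi (ncmul (ncchi a) z) = ncmul a (ncpi z).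
Proof.
move: a z; apply: (lin_ext2 (f := fun a z => ncpi (ncmul (ncchi a) z))
                            (g := fun a z => ncmul a (ncpi z))) => [z|z|a|a|x w].
- exact: lin_comp (@chi_lin _) (lin_comp (ncmul_linl z) (@pi_lin _)).
- exact: ncmul_linl.
- exact: lin_comp (ncmul_linr _) (@pi_lin _).
- exact: lin_comp (@pi_lin _) (ncmul_linr a).
rewrite chi_Yb ncmul_YY (linZ (@pi_lin _)).
case: (eqVneq (w ord_max) ord_max) => Hw.
  have [w' Hw'] := unlift_ex Hw.
  by rewrite -Hw' -lft_mul !pi_Yb_lft ncmul_YY /dl -lft_mul !len_lift.
have Hw' : (lft x * w)%g ord_max != ord_max by rewrite fixP.
by rewrite (pi_Yb_out Hw') (pi_Yb_out Hw) ncmul0r scaler0.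
Qed.

Lemma Phi_left_phi (a : NC m.+1) (z : NC m.+2) : phi2 (ncmul (ncchi a) z) = l2 a (phi2 z).
Proof.
move: a z; apply: (lin_ext2 (f := fun a z => phi2 (ncmul (ncchi a) z))
                            (g := fun a z => l2 a (phi2 z))) => [z|z|a|a|x w].
- exact: lin_comp (@chi_lin _) (lin_comp (ncmul_linl z) phi2_lin).
- exact: l2_linl.
- exact: lin_comp (ncmul_linr _) phi2_lin.
- exact: lin_comp phi2_lin (l2_linr a).
rewrite chi_Yb ncmul_YY (linZ phi2_lin) !phi2_Yb /phib fixP.
case: ifP => Hw0.
  by rewrite scaler0 (lin0 (l2_linr _)).
have Hw : w ord_max != ord_max by rewrite Hw0.
have Ew := decomp Hw; rewrite /vw in Ew.
have Hdl : dl (lft x) w = dl x (uw w) by rewrite {1}Ew dl_left.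
have E2 : (lft x * w)%g = (lft (x * uw w) * sg m * lft (vq (qw w)))%g.
  by rewrite {1}Ew !mulgA lft_mul.
have [Hq Hu] := decomp_uniq (x * uw w) (qw w).
rewrite Hdl E2 /vw Hq Hu -bal4 ncmul_YY (linZ (t2_linl _)).
done.
Qed.

Lemma fixP2 (w : 'S_(m.+2)) (y : 'S_(m.+1)) :
  ((w * lft y)%g ord_max == ord_max) = (w ord_max == ord_max).
Proof. by rewrite permM -[X in _ == X](lftN y) (inj_eq (@perm_inj _ _)). Qed.

Lemma dl_L2 (c : 'S_m) (q : 'I_(m.+1)) : dl (lft c) (vq q) = 1.
Proof. by rewrite /dl L2 len_lift eqxx. Qed.

Lemma Phi_right_pi (z : NC m.+2) (b : NC m.+1) : ncpi (ncmul z (ncchi b)) = ncmul (ncpi z) b.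
Proof.
move: z b; apply: (lin_ext2 (f := fun z b => ncpi (ncmul z (ncchi b)))
                            (g := fun z b => ncmul (ncpi z) b)) => [b|b|z|z|w y].
- exact: lin_comp (ncmul_linl _) (@pi_lin _).
- exact: lin_comp (@pi_lin _) (ncmul_linl b).
- exact: lin_comp (@chi_lin _) (lin_comp (ncmul_linr z) (@pi_lin _)).
- exact: ncmul_linr.
rewrite chi_Yb ncmul_YY (linZ (@pi_lin _)).
case: (eqVneq (w ord_max) ord_max) => Hw.
  have [w' Hw'] := unlift_ex Hw.
  by rewrite -Hw' -lft_mul !pi_Yb_lft ncmul_YY /dl -lft_mul !len_lift.
have Hw' : (w * lft y)%g ord_max != ord_max by rewrite fixP2.
by rewrite (pi_Yb_out Hw') (pi_Yb_out Hw) ncmul0l scaler0.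
Qed.

Lemma Phi_right_phi (z : NC m.+2) (b : NC m.+1) : phi2 (ncmul z (ncchi b)) = r2 (phi2 z) b.
Proof.
move: z b; apply: (lin_ext2 (f := fun z b => phi2 (ncmul z (ncchi b)))
                            (g := fun z b => r2 (phi2 z) b)) => [b|b|z|z|w y].
- exact: lin_comp (ncmul_linl _) phi2_lin.
- exact: lin_comp phi2_lin (r2_linl b).
- exact: lin_comp (@chi_lin _) (lin_comp (ncmul_linr z) phi2_lin).
- exact: r2_linr.
rewrite chi_Yb ncmul_YY (linZ phi2_lin) !phi2_Yb /phib fixP2.
case: ifP => Hw0.
  by rewrite scaler0 (lin0 (r2_linl _)).
have Hw : w ord_max != ord_max by rewrite Hw0.
have Ew := decomp Hw; rewrite /vw in Ew.
have [c Hc] := vq_right (qw w) y.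
have Hdl : dl w (lft y) = dl (vq (qw w)) y * dl (uw w) (lft c).
  by rewrite {1}Ew (dl_right _ Hc).
have E2 : (w * lft y)%g = (lft (uw w * lft c) * sg m * lft (vq (y (qw w))))%g.
  by rewrite {1}Ew (w_right _ Hc).
have [Hq Hu] := decomp_uniq (uw w * lft c) (y (qw w)).
rewrite Hdl E2 /vw Hq Hu -bal5 ncmul_YY (linZ (t2_linr _)) Hc.
have -> : Yb (lft c * vq (y (qw w)))%g = ncmul (ncchi (Yb c)) (Yb (vq (y (qw w)))).
  by rewrite chi_Yb ncmul_YY dl_L2 scale1r.
by rewrite -bal3 chi_Yb ncmul_YY (linZ (t2_linl _)) scalerA mulrC.
Qed.

Lemma Phi_hom : is_bimod_hom (@Dl m.+1) (@Xr m.+1) (sum_l l2) (sum_r r2) Phi.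
Proof.
split; [exact: Phi_lin|split].
- by move=> a x; rewrite /Phi /Dl /sum_l /= Phi_left_pi Phi_left_phi.
- by move=> x b; rewrite /Phi /Xr /sum_r /= Phi_right_pi Phi_right_phi.
Qed.

Definition Ys : NC m.+2 := Yb (sg m).
Definition f2 (x y : NC m.+1) : NC m.+2 := ncmul (ncchi x) (ncmul Ys (ncchi y)).

Lemma f2_bal : is_balanced (@Xl m) (@Xr m) (@Dl m) (@Dr m) (@Dl m.+1) (@Xr m.+1) f2.
Proof.
rewrite /is_balanced /f2 /Xl /Xr /Dl /Dr; split; [|split; [|split; [|split]]].
- by move=> c x x' y; rewrite (chi_lin c x x') ncmul_linl.
- by move=> c x y y'; rewrite (chi_lin c y y') ncmul_linr ncmul_linr.
- move=> x c y; rewrite !chi_mul ncmul_assoc; congr (ncmul _ _).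
  by rewrite -!ncmul_assoc Ys_comm.
- by move=> b x y; rewrite chi_mul ncmul_assoc.
- by move=> x y c; rewrite chi_mul !ncmul_assoc.
Qed.

Lemma sg_decomp : uw (sg m) = 1%g /\ vw (sg m) = 1%g.
Proof.
have [Hq Hu] := decomp_uniq (m := m) 1%g ord_max.
rewrite vq_max !lft1 mul1g mulg1 in Hq Hu.
by split => //; rewrite /vw Hq vq_max.
Qed.

Lemma sg_notfix : sg m ord_max != ord_max.
Proof. by apply/eqP => /(congr1 (@nat_of_ord _)); rewrite sgN /=; lia. Qed.

Lemma Phi_Ys : Phi Ys = (0, t2 (ncone m.+1) (ncone m.+1)).
Proof.
rewrite /Phi /Ys pi_Yb_out ?sg_notfix // phi2_Yb /phib (negbTE sg_notfix).
by case: sg_decomp => -> ->.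
Qed.
End G2.

Lemma lin_add (U V : lmodType rat) (f g : U -> V) :
  lin f -> lin g -> lin (fun x => f x + g x).
Proof. by move=> Hf Hg c x y; rewrite Hf Hg scalerDr addrACA. Qed.

Lemma pairE n (T : lmodType rat) (c : rat) (a a' : NC n) (t t' : T) :
  c *: ((a, t) : (NC n * T)%type) + (a', t') = (c *: a + a', c *: t + t').
Proof. by []. Qed.

Lemma pairD n (T : lmodType rat) (a a' : NC n) (t t' : T) :
  ((a, t) : (NC n * T)%type) + (a', t') = (a + a', t + t').
Proof. by []. Qed.

Lemma G2 m (T2 : lmodType rat) (l2 : NC m.+1 -> T2 -> T2) (r2 : T2 -> NC m.+1 -> T2)
  (t2 : NC m.+1 -> NC m.+1 -> T2) :
  is_tensor (@Xl m) (@Xr m) (@Dl m) (@Dr m) l2 r2 t2 ->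
  bimod_iso (@Dl m.+1) (@Xr m.+1) (@sum_l m.+1 T2 l2) (@sum_r m.+1 T2 r2).
Proof.
move=> HT2.
have Hb := HB2 HT2.
case: (HT2) => _ [_ Huniv].
have [psi2 [Hpsi Hpsit _]] := Huniv _ _ _ _ (@bimod_DX m.+1) (f2_bal m).
have psi_lin : lin psi2 by case: Hpsi.
exists (Phi t2); split; first exact: Phi_hom.
exists (fun p => ncchi p.1 + psi2 p.2).
- apply: (lin_ext (f := fun z => ncchi (ncpi z) + psi2 (phi2 t2 z)) (g := id)) => [||w].
  + exact: lin_add (lin_comp (@pi_lin _) (@chi_lin _)) (lin_comp (phi2_lin t2) psi_lin).
  + by move=> c x y.
  rewrite phi2_Yb /phib; case: ifP => Hw0.
    have [w' Hw'] := unlift_ex (eqP Hw0).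
    by rewrite (lin0 psi_lin) addr0 -Hw' pi_Yb_lft chi_Yb.
  have Hw : w ord_max != ord_max by rewrite Hw0.
  rewrite pi_Yb_out // (lin0 (@chi_lin _)) add0r Hpsit /f2 /Ys !chi_Yb.
  have Ew := decomp Hw; rewrite /vw in Ew.
  have [d1 d2] := dl_L1 (uw w) (qw w).
  rewrite ncmul_YY d1 scale1r ncmul_YY d2 scale1r /vw mulgA -Ew //.
- move=> [a t] /=.
  rewrite (linD (Phi_lin t2)).
  have -> : Phi t2 (ncchi a) = (a, 0).
    rewrite /Phi pi_chi; congr (_, _).
    apply: (lin_ext (f := fun a => phi2 t2 (ncchi a)) (g := fun _ => 0)) => [||x].
    * exact: lin_comp (@chi_lin _) (phi2_lin t2).
    * by move=> c x y; rewrite scaler0 addr0.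
    by rewrite chi_Yb phi2_Yb /phib lftN eqxx.
  suff -> : Phi t2 (psi2 t) = (0, t) by rewrite pairD addr0 add0r.
  have Hbs := bimod_sum Hb.
  have Hbal0 : is_balanced (@Xl m) (@Xr m) (@Dl m) (@Dr m) (sum_l l2) (sum_r r2)
                 (fun x y => ((0 : NC m.+1), t2 x y)).
    rewrite /is_balanced /sum_l /sum_r /=; split; [|split; [|split; [|split]]].
    + by move=> c x x' y; rewrite pairE (t2_linl HT2) scaler0 addr0.
    + by move=> c x y y'; rewrite pairE (t2_linr HT2) scaler0 addr0.
    + by move=> x c y; rewrite /Xr /Dl (bal3 HT2).
    + by move=> b x y; rewrite /Xl (bal4 HT2) ncmul0r.
    + by move=> x y c; rewrite /Dr (bal5 HT2) ncmul0l.
  have [g0 [_ _ Hu]] := Huniv _ _ _ _ Hbs Hbal0.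
  have E1 := Hu (fun t => Phi t2 (psi2 t)) (hom_comp Hpsi (Phi_hom HT2)).
  have E2 := Hu (fun t => ((0 : NC m.+1), t)).
  rewrite E1; last first.
    move=> x y; rewrite Hpsit /f2.
    case: (Phi_hom HT2) => _ [HL HR].
    rewrite -/(Dl x _) HL -/(Xr _ y) HR (Phi_Ys t2) /sum_l /sum_r /=.
    rewrite ncmul0l ncmul0r -(bal5 HT2) ncmul1l -(bal4 HT2) ncmul1r //.
  rewrite E2 //.
  split; [|split].
  + by move=> c x y; rewrite pairE scaler0 addr0.
  + by move=> a0 x; rewrite /sum_l /= ncmul0r.
  + by move=> x0 b; rewrite /sum_r /= ncmul0l.
Qed.

Theorem mainTheorem6 :
  (forall (T1 : lmodType rat) (l1 : NC 0 -> T1 -> T1) (r1 : T1 -> NC 0 -> T1)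
          (t1 : NC 1 -> NC 1 -> T1),
     is_tensor (@Dl 0) (@Dr 0) (@Xl 0) (@Xr 0) l1 r1 t1 ->
     bimod_iso l1 r1 (@Al 0) (@Ar 0)) /\
  (forall (m : nat)
          (T1 : lmodType rat) (l1 : NC m.+1 -> T1 -> T1) (r1 : T1 -> NC m.+1 -> T1)
          (t1 : NC m.+2 -> NC m.+2 -> T1)
          (T2 : lmodType rat) (l2 : NC m.+1 -> T2 -> T2) (r2 : T2 -> NC m.+1 -> T2)
          (t2 : NC m.+1 -> NC m.+1 -> T2),
     is_tensor (@Dl m.+1) (@Dr m.+1) (@Xl m.+1) (@Xr m.+1) l1 r1 t1 ->
     is_tensor (@Xl m) (@Xr m) (@Dl m) (@Dr m) l2 r2 t2 ->
     bimod_iso l1 r1 (@sum_l m.+1 T2 l2) (@sum_r m.+1 T2 r2)).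
Proof.
split.
- move=> T1 l1 r1 t1 H; exact: iso_trans (G1 H) G0.
- move=> m T1 l1 r1 t1 T2 l2 r2 t2 H1 H2; exact: iso_trans (G1 H1) (G2 H2).
Qed.
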